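(* Let $D=(V,E;s,t)$, $N$, $\mathscr{B}$ be as in the context, let $x\in\mathcal{C}(\widetilde\Gamma_D)$ and let $\phi_x$ be its potential. Then (i) for every $s$-$t$ path $P$, $x(N\cap P)=1+\sum_{(u,v)\in J_P}\big(\phi_x(u)-\phi_x(v)\big)$; (ii) for every cycle $C$, $x(N\cap C)=\sum_{(u,v)\in J_C}\big(\phi_x(u)-\phi_x(v)\big)$.
   Context: $D=(V,E;s,t)$ is a directed network with unit arc capacities (parallel arcs allowed); $N\subseteq E$ is the set of private arcs (players), $M=E\setminus N$ public arcs; every $s$-$t$ path contains an arc of $N$ and every arc lies on some $s$-$t$ path. A path is a set of arcs joining a sequence of distinct vertices along the same direction. Two paths are disjoint on $N$ if they share no arc of $N$; $\sigma_N$ is the maximum number of $s$-$t$ paths pairwise disjoint on $N$. For $S\subseteq N$, $\gamma(S)$ is the maximum number of pairwise arc-disjoint $s$-$t$ paths in $D_S=(V,S\cup M;s,t)$. Auxiliary game $\widetilde\Gamma_D=(N,\tilde\gamma)$: $\tilde\gamma(N)=\sigma_N$, $\tilde\gamma(S)=\gamma(S)$ for $S\subsetneq N$; core $\mathcal{C}(\widetilde\Gamma_D)=\{x\in\mathbb{R}^N_{\ge0}:x(N)=\sigma_N,\ x(S)\ge\tilde\gamma(S)\ \forall S\subseteq N\}$ with $x(S)=\sum_{i\in S}x_i$. Potential: $\phi_x(v)$ is the length of a shortest $s$-$v$ path when arcs $e\in N$ have length $x(e)$ and public arcs length $0$. Fix a maximum family $\mathscr{B}$ of $s$-$t$ paths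 pairwise disjoint on $N$; a $\mathscr{B}$-vertex is a vertex on a path of $\mathscr{B}$. A $u$-$v$ jump is a $u$-$v$ path whose end vertices are $\mathscr{B}$-vertices, with no intermediate $\mathscr{B}$-vertex, and which is not a single arc of a path of $\mathscr{B}$; $(u,v)$ is its jump pair. For an $s$-$t$ path or cycle $W$, cut $W$ at each of its $\mathscr{B}$-vertices into consecutive pieces (each going from a $\mathscr{B}$-vertex $u$ to the next $\mathscr{B}$-vertex $v$ along $W$); $J_W$ is the set of pairs $(u,v)$ of those pieces that are jumps, i.e. $W=P_0*Q_1*P_1*\cdots*Q_r*P_r$ with $P_i$ (possibly empty) subpaths of paths of $\mathscr{B}$, $Q_i$ jumps, and $J_W$ the jump pairs of $Q_1,\dots,Q_r$ ($J_W=\emptyset$ if $W$ is a cycle without $\mathscr{B}$-vertices). *)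

(* Defs.v *)
From HB Require Import structures.
From mathcomp Require Import all_boot all_order all_algebra.
From mathcomp Require Import boolp.
Set Implicit Arguments. Unset Strict Implicit. Unset Printing Implicit Defensive.
Import Order.TTheory GRing.Theory Num.Theory.

(* A directed network D = (V, E; s, t) with parallel arcs: arcs are elements
   of the finite type E, arc e goes from [tl e] to [hd e].  N : {set E} is the
   set of private arcs; public arcs are those not in N. *)

Section Network.
Variables (V E : finType) (tl hd : E -> V).

Fixpoint walk_from (a : V) (es : seq E) : bool :=
  if es is e :: es' then (tl e == a) && walk_from (hd e) es' else true.

Definition walk_verts (a : V) (es : seq E) : seq V := a :: map hd es.

Definition is_path (a b : V) (es : seq E) : bool :=
  [&& walk_from a es, uniq (walk_verts a es) & last a (map hd es) == b].

Definition is_cycle (a : V) (es : seq E) : bool :=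
  [&& es != [::], walk_from a es, last a (map hd es) == a & uniq (map hd es)].

Variables (s t : V) (N : {set E}).

Definition every_st_path_has_private : Prop :=
  forall es, is_path s t es -> exists2 e, e \in N & e \in es.
Definition every_arc_on_st_path : Prop :=
  forall e : E, exists2 es, is_path s t es & e \in es.

Definition N_disjoint_family (F : seq (seq E)) : Prop :=
  (forall P, P \in F -> is_path s t P) /\
  (forall i j, (i < j < size F)%N ->
     forall e, e \in N -> e \in nth [::] F i -> e \notin nth [::] F j).

(* a family of pairwise arc-disjoint s-t paths in D_S = (V, S u M; s, t) *)
Definition S_arc_disjoint_family (S : {set E}) (F : seq (seq E)) : Prop :=
  (forall P, P \in F -> is_path s t P /\ forall e, e \in P -> (e \in S) || (e \notin N)) /\
  (forall i j, (i < j < size F)%N ->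
     forall e, e \in nth [::] F i -> e \notin nth [::] F j).

(* Under the
   standing assumption every such path has a private arc, so this number is
   at most #|N| <= #|E|; the max is taken over k <= #|E|. *)
Definition sigmaN : nat :=
  \max_(k < #|E|.+1 | `[< exists2 F, N_disjoint_family F & size F = k >]) k.

(* gamma(S) : maximum number of pairwise arc-disjoint s-t paths in D_S
   (each such path is nonempty since s <> t, so it is at most #|E|). *)
Definition gamma (S : {set E}) : nat :=
  \max_(k < #|E|.+1 | `[< exists2 F, S_arc_disjoint_family S F & size F = k >]) k.

Definition gamma_tilde (S : {set E}) : nat :=
  if S == N then sigmaN else gamma S.

Definition max_family (B : seq (seq E)) : Prop :=
  N_disjoint_family B /\ size B = sigmaN.

Local Open Scope ring_scope.
Variable R : realFieldType.

Definition xsum (x : E -> R) (S : {set E}) : R := \sum_(e in S) x e.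

(* the core C(tilde Gamma_D); x is only meaningful on N *)
Definition in_core (x : E -> R) : Prop :=
  (forall e, e \in N -> 0 <= x e) /\
  xsum x N = (sigmaN)%:R /\
  (forall S : {set E}, S \subset N -> (gamma_tilde S)%:R <= xsum x S).

Definition plen (x : E -> R) (es : seq E) : R :=
  \sum_(e <- es) (if e \in N then x e else 0).

Definition is_potential (x : E -> R) (phi : V -> R) : Prop :=
  forall v, (exists es, is_path s v es) ->
    (exists2 es, is_path s v es & plen x es = phi v) /\
    (forall es, is_path s v es -> phi v <= plen x es).

Definition xN (x : E -> R) (es : seq E) : R :=
  \sum_(e | (e \in N) && (e \in es)) x e.

Variable B : seq (seq E).

(* B-vertices: vertices on a path of B (paths of B start at s) *)
Definition isBv (v : V) : bool := has (fun P => v \in walk_verts s P) B.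

(* cutting a walk at its B-vertices: [pieces_aux u cur es] continues a piece
   started at the B-vertex u with arcs cur so far; a piece is
   (start B-vertex, end B-vertex, arcs of the piece) *)
Fixpoint pieces_aux (u : V) (cur : seq E) (es : seq E) : seq (V * V * seq E) :=
  if es is e :: es' then
    if isBv (hd e) then (u, hd e, rcons cur e) :: pieces_aux (hd e) [::] es'
    else pieces_aux u (rcons cur e) es'
  else [::].

(* pieces of a path (a, es): the part before the first and after the last
   B-vertex is not a piece *)
Fixpoint path_pieces (a : V) (es : seq E) : seq (V * V * seq E) :=
  if isBv a then pieces_aux a [::] es
  else if es is e :: es' then path_pieces (hd e) es' else [::].

Definition cycle_pieces (a : V) (es : seq E) : seq (V * V * seq E) :=
  let vs := walk_verts a es in
  let i := find isBv vs in
  if (i < size es)%N then pieces_aux (nth a vs i) [::] (rot i es) else [::].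

Definition is_jump (pc : V * V * seq E) : bool :=
  if pc.2 is [:: e] then ~~ has (fun P => e \in P) B else true.

Definition jump_pairs (pcs : seq (V * V * seq E)) : seq (V * V) :=
  undup [seq pc.1 | pc <- pcs & is_jump pc].

Definition J_path (a : V) (es : seq E) := jump_pairs (path_pieces a es).
Definition J_cycle (a : V) (es : seq E) := jump_pairs (cycle_pieces a es).

End Network.

(* Main.v *)
Require Import Defs.
From HB Require Import structures.
From mathcomp Require Import all_boot all_order all_algebra.
From mathcomp Require Import boolp.
From mathcomp Require Import ring lra.
Import Order.TTheory GRing.Theory Num.Theory.
Set Implicit Arguments. Unset Strict Implicit. Unset Printing Implicit Defensive.

Section Walks.
Variables (V E : finType) (tl hd : E -> V).

Lemma walk_cat a p1 p2 :
  walk_from tl hd a (p1 ++ p2) =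
  walk_from tl hd a p1 && walk_from tl hd (last a (map hd p1)) p2.
Proof.
elim: p1 a => [|e p1 IH] a //=. by rewrite IH andbA.
Qed.

Lemma path_cat a b p1 p2 : is_path tl hd a b (p1 ++ p2) ->
  is_path tl hd a (last a (map hd p1)) p1 /\
  is_path tl hd (last a (map hd p1)) b p2.
Proof.
rewrite /is_path walk_cat /walk_verts map_cat last_cat.
case/and3P => /andP[w1 w2] u /eqP <-; rewrite w1 w2 eqxx /=.
move: u; rewrite -cat_cons cat_uniq => /and3P[u1 /hasPn h u2].
rewrite -[_ && uniq _]/(uniq (a :: _)) u1 u2 eqxx /=; split => //.
rewrite !andbT; apply/negP => H; move: (h _ H); by rewrite mem_last.
Qed.

Lemma split_vert a v p : v \in walk_verts hd a p ->
  exists p1 p2, p = p1 ++ p2 /\ last a (map hd p1) = v.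
Proof.
rewrite /walk_verts inE => /orP[/eqP->|]; first by exists [::], p.
case/mapP => f fp ->; case/splitPr: fp => p1 p2.
exists (rcons p1 f), p2; by rewrite cat_rcons map_rcons last_rcons.
Qed.

Lemma shortcut a es : walk_from tl hd a es ->
  exists2 p, subseq p es & is_path tl hd a (last a (map hd es)) p.
Proof.
elim: es a => [|e es IH] a /=.
  move=> _; exists [::] => //; by rewrite /is_path /= eqxx.
case/andP => /eqP tle w.
have [p sp pp] := IH _ w.
case: (boolP (a \in walk_verts hd (hd e) p)) => ha.
  have [p1 [p2 [dp lp]]] := split_vert ha.
  rewrite dp in pp; have [_ pp2] := path_cat pp.
  exists p2; last by rewrite -lp.
  apply: subseq_trans (subseq_cons _ e).
  apply: subseq_trans sp; rewrite dp; exact: suffix_subseq.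
exists (e :: p); first by rewrite /= eqxx.
move: pp; rewrite /is_path /walk_verts /= tle eqxx /=.
case/and3P=> -> -> ->; move: ha; rewrite /walk_verts => -> //.
Qed.

Lemma path_uniq a b p : is_path tl hd a b p -> uniq p.
Proof. case/and3P => _ /= /andP[_ u] _; exact: map_uniq u. Qed.

Lemma subseq_belast (u y : V) (s : seq V) : subseq (belast u s) (u :: belast y s).
Proof.
case: s => [|z s]; first by [].
change (subseq ([:: u] ++ belast z s) ([:: u] ++ (y :: belast z s))).
apply: cat_subseq => //; exact: subseq_cons.
Qed.

End Walks.

Section Pieces.
Variables (V E : finType) (hd : E -> V) (s : V) (B : seq (seq E)).

Lemma starts_subseq u cur es :
  subseq [seq pc.1.1 | pc <- pieces_aux hd s B u cur es] (belast u (map hd es)).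
Proof.
elim: es u cur => [|e es IH] u cur; first by [].
rewrite [pieces_aux _ _ _ _ _ _]/=.
case: ifP => _.
  change (subseq ([:: u] ++ [seq pc.1.1 | pc <- pieces_aux hd s B (hd e) [::] es])
                 ([:: u] ++ belast (hd e) [seq hd i | i <- es])).
  apply: cat_subseq => //; exact: IH.
apply: (subseq_trans (IH u (rcons cur e))); exact: subseq_belast.
Qed.

Lemma nth_last_take (T : Type) (a : T) (l : seq T) i : (i <= size l)%N ->
  nth a (a :: l) i = last a (take i l).
Proof.
move=> il; rewrite (last_nth a) -[a :: take i l]/(take i.+1 (a :: l)).
by rewrite size_take; case: ltnP il => // h1 h2; rewrite nth_take //;
  have -> : i = size l by apply/eqP; rewrite eqn_leq h1 h2.
Qed.

End Pieces.

Local Open Scope ring_scope.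

Section Main.
Variables (R : realFieldType) (V E : finType) (tl hd : E -> V)
  (s t : V) (N : {set E}).
Hypothesis HN : every_st_path_has_private tl hd s t N.
Variable B : seq (seq E).
Hypothesis HB : max_family tl hd s t N B.
Variable x : E -> R.
Hypothesis Hx : in_core tl hd s t N x.
Variable phi : V -> R.
Hypothesis Hphi : is_potential tl hd s N x phi.

Let w e := if e \in N then x e else 0.

Lemma plenE es : plen N x es = \sum_(e <- es) w e.
Proof. by []. Qed.

Lemma w_ge0 e : 0 <= w e.
Proof. rewrite /w; case: ifP => // eN; exact: Hx.1. Qed.

Lemma plen_ge0 es : 0 <= plen N x es.
Proof. apply: sumr_ge0 => e _; exact: w_ge0. Qed.

Lemma plen_cat p q : plen N x (p ++ q) = plen N x p + plen N x q.
Proof. by rewrite !plenE big_cat. Qed.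

Lemma plen_subseq p q : subseq p q -> plen N x p <= plen N x q.
Proof.
elim: q p => [|y q IH] [|z p] //.
- move=> _; rewrite {1}plenE big_nil; exact: plen_ge0.
rewrite [subseq _ _]/=.
case: ifP => [/eqP -> | _] sp.
  by rewrite !plenE !big_cons -!plenE lerD2l IH.
rewrite [plen _ _ (y :: q)]plenE big_cons -plenE.
apply: le_trans (IH _ sp) _; rewrite lerDr; exact: w_ge0.
Qed.

Lemma xN_plen p : uniq p -> xN N x p = plen N x p.
Proof.
move=> up; rewrite plenE big_uniq // /xN /w.
rewrite -big_mkcondr /=; apply: eq_bigl => e; by rewrite andbC.
Qed.

Lemma s_neq_t : s != t.
Proof.
apply/negP => /eqP st.
have h : is_path tl hd s t [::] by rewrite /is_path /= st eqxx.
by have [e] := HN h.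
Qed.

Lemma path_nonnil P : is_path tl hd s t P -> P != [::].
Proof. case: P => // /and3P[_ _]; rewrite /= => /eqP st; by move: s_neq_t; rewrite st eqxx. Qed.

Lemma E_pos P : is_path tl hd s t P -> (1 < #|E|.+1)%N.
Proof.
move=> /path_nonnil; case: P => // e P _; rewrite ltnS; apply/card_gt0P; by exists e.
Qed.

Lemma sigma_pos P : is_path tl hd s t P -> (0 < sigmaN tl hd s t N)%N.
Proof.
move=> pP; rewrite /sigmaN.
apply: leq_trans _ (@leq_bigmax_cond _ _ (fun k => nat_of_ord k) (Ordinal (E_pos pP)) _) => //.
apply/asboolP; exists [:: P] => //; split.
  by move=> Q; rewrite inE => /eqP ->.
by move=> i j /andP[ij]; rewrite /= ltnS leqn0 => /eqP j0; rewrite j0 in ij.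
Qed.

Lemma gamma_pos P (S : {set E}) : is_path tl hd s t P -> (forall e, e \in P -> (e \in S) || (e \notin N)) ->
  (0 < gamma tl hd s t N S)%N.
Proof.
move=> pP hS; rewrite /gamma.
apply: leq_trans _ (@leq_bigmax_cond _ _ (fun k => nat_of_ord k) (Ordinal (E_pos pP)) _) => //.
apply/asboolP; exists [:: P] => //; split.
  by move=> Q; rewrite inE => /eqP ->; split.
by move=> i j /andP[ij]; rewrite /= ltnS leqn0 => /eqP j0; rewrite j0 in ij.
Qed.

Lemma path_ge1 P : is_path tl hd s t P -> 1 <= xN N x P.
Proof.
move=> pP.
pose S := [set e | (e \in N) && (e \in P)].
have sS : S \subset N by apply/subsetP => e; rewrite inE => /andP[].
have := Hx.2.2 S sS.
have -> : xsum x S = xN N x P by apply: eq_bigl => e; rewrite inE.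
apply: le_trans; rewrite ler1n /gamma_tilde; case: ifP => _.
  exact: sigma_pos pP.
apply: gamma_pos pP _ => e eP; rewrite inE eP andbT; by case: (e \in N).
Qed.

Lemma sum_disj (F : seq (seq E)) :
  (forall i j, (i < j < size F)%N ->
     forall e, e \in N -> e \in nth [::] F i -> e \notin nth [::] F j) ->
  \sum_(Q <- F) xN N x Q = \sum_(e | (e \in N) && has (fun Q => e \in Q) F) x e.
Proof.
elim: F => [|Q F IH] Hd.
  rewrite big_nil big_pred0 // => e; by rewrite andbF.
rewrite big_cons IH; last first.
  by move=> i j ij; apply: (Hd i.+1 j.+1).
rewrite [RHS](bigID (fun e => e \in Q)) /=; congr (_ + _).
  apply: eq_bigl => e; case: (e \in N) => //=; case: (e \in Q) => //=; by rewrite andbF.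
apply: eq_bigl => e; case eN: (e \in N) => //=.
case eQ: (e \in Q) => /=.
  apply/negP => /hasP [Q' Q'F eQ'].
  have := Hd 0%N (index Q' F).+1; rewrite /= ltnS index_mem Q'F nth_index // => /(_ isT e eN eQ).
  by rewrite eQ'.
by rewrite andbT.
Qed.

Lemma sum1_seq (T : Type) (r : seq T) : \sum_(i <- r) (1 : R) = (size r)%:R.
Proof. by rewrite -sum1_size natr_sum. Qed.

Lemma le_sum_mem (T : eqType) (r : seq T) (F : T -> R) i :
  (forall j, j \in r -> 0 <= F j) -> i \in r -> F i <= \sum_(j <- r) F j.
Proof.
move=> h ir; rewrite (big_rem _ ir) /= lerDl big_seq_cond.
apply: sumr_ge0 => j /andP[jr _]; apply: h; exact: mem_rem jr.
Qed.

Lemma B_facts :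
  (forall Q, Q \in B -> xN N x Q = 1) /\
  (forall e, e \in N -> ~~ has (fun Q => e \in Q) B -> x e = 0).
Proof.
have [[Bp Bd] Bs] := HB.
have [x0 [xs _]] := Hx.
have ge1 Q : Q \in B -> 0 <= xN N x Q - 1.
  by move=> QB; rewrite subr_ge0; apply: path_ge1 (Bp _ QB).
move: xs; rewrite /xsum (bigID (fun e => has (fun Q => e \in Q) B)) /= -Bs.
rewrite -(sum_disj Bd) -[X in _ = X%:R]/(size B) -sum1_seq.
rewrite -[\sum_(Q <- B) xN N x Q](subrK (\sum_(i <- B) (1:R))) -sumrB.
set G := \sum_(i <- B) _; set K := \sum_(i <- B) _; set S2 := \sum_(i in N | _) _.
move=> h.
have G0 : 0 <= G by rewrite /G big_seq; apply: sumr_ge0 => Q; exact: ge1.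
have S0 : 0 <= S2 by apply: sumr_ge0 => e /andP[eN _]; exact: x0.
have GZ : G = 0 by lra.
have SZ : S2 = 0 by lra.
split.
  move=> Q QB; have := le_sum_mem (F := fun Q => xN N x Q - 1) ge1 QB.
  rewrite -/G GZ => h'; have := ge1 Q QB; lra.
move=> e eN eB.
apply: (psumr_eq0P _ SZ) => [i /andP[iN _]|]; [exact: x0 | by rewrite eN].
Qed.


Lemma prefix_phi Q Q1 Q2 : Q \in B -> Q = Q1 ++ Q2 ->
  phi (last s (map hd Q1)) = plen N x Q1.
Proof.
move=> QB dQ; have [[Bp _] _] := HB; have pQ := Bp _ QB.
have hQ := B_facts.1 _ QB.
rewrite (xN_plen (path_uniq (Bp _ QB))) dQ plen_cat in hQ.
rewrite dQ in pQ; have [p1 p2] := path_cat pQ.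
set v := last s _ in p1 p2 *.
have [[R1 pR eR] hle] := Hphi (ex_intro _ Q1 p1).
have le1 := hle _ p1.
case/and3P: (pR) => wR1 _ /eqP lR1.
case/and3P: (p2) => wQ2 _ /eqP lQ2.
have wR : walk_from tl hd s (R1 ++ Q2) by rewrite walk_cat wR1 lR1 wQ2.
have [P' sP' pP'] := shortcut wR.
rewrite map_cat last_cat lR1 lQ2 in pP'.
have := path_ge1 pP'; rewrite (xN_plen (path_uniq pP')).
have := plen_subseq sP'; rewrite plen_cat eR.
lra.
Qed.

Lemma arcB Q e : Q \in B -> e \in Q ->
  [/\ w e = phi (hd e) - phi (tl e), isBv hd s B (tl e) & isBv hd s B (hd e)].
Proof.
move=> QB eQ; have [[Bp _] _] := HB.
case/splitPr: eQ QB (Bp _ QB) => p1 p2 QB pQ.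
have tle : tl e = last s (map hd p1).
  case/and3P: pQ => wQ _ _; move: wQ; rewrite walk_cat => /andP[_] /= /andP[/eqP -> _] //.
split.
- rewrite tle (prefix_phi QB (erefl _)).
  have e2 : p1 ++ e :: p2 = rcons p1 e ++ p2 by rewrite cat_rcons.
  have := prefix_phi QB e2; rewrite map_rcons last_rcons => ->.
  rewrite -cats1 plen_cat.
  rewrite [plen _ _ [:: e]]plenE big_seq1; ring.
- apply/hasP; exists (p1 ++ e :: p2) => //.
  by rewrite tle /walk_verts map_cat -cat_cons mem_cat mem_last.
- apply/hasP; exists (p1 ++ e :: p2) => //.
  by rewrite /walk_verts inE map_f ?orbT // mem_cat inE eqxx orbT.
Qed.

Lemma notB_w0 e : ~~ isBv hd s B (hd e) || ~~ isBv hd s B (tl e) -> w e = 0.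
Proof.
move=> h; rewrite /w; case: ifP => // eN; apply: (B_facts.2 _ eN).
apply/hasP => [[Q QB eQ]]; have [_ h1 h2] := arcB QB eQ.
by rewrite h1 h2 in h.
Qed.

Lemma piece_len u cur e : tl e = last u (map hd cur) ->
  all (fun f => ~~ isBv hd s B (hd f)) cur ->
  plen N x (rcons cur e) = phi (hd e) - phi u +
    (if is_jump B (u, hd e, rcons cur e) then phi u - phi (hd e) else 0).
Proof.
case: cur => [|c cur] tle hall.
  rewrite /= in tle; rewrite /is_jump /=.
  case hh: (has (fun P => e \in P) B) => /=.
    case/hasP: hh => Q QB eQ; have [he _ _] := arcB QB eQ.
    rewrite plenE big_seq1 he tle; ring.
  rewrite plenE big_seq1 /w; case: ifP => eN; last ring.
  rewrite (B_facts.2 _ eN (negbT hh)); ring.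
have -> : is_jump B (u, hd e, rcons (c :: cur) e) = true by case: (cur) {tle hall}.
rewrite plenE big1_seq; first ring.
move=> f /andP[_]; rewrite mem_rcons inE => /orP[/eqP -> | fc].
  apply: notB_w0; rewrite tle /=; apply/orP; right.
  have : last (hd c) (map hd cur) \in map hd (c :: cur) by exact: mem_last.
  case/mapP => g gc ->; by rewrite (allP hall g gc).
apply: notB_w0; by rewrite (allP hall f fc).
Qed.

Lemma main_aux u cur es :
  walk_from tl hd (last u (map hd cur)) es ->
  all (fun f => ~~ isBv hd s B (hd f)) cur ->
  (es = [::] -> cur = [::]) ->
  isBv hd s B (last u (map hd (cur ++ es))) ->
  plen N x (cur ++ es) = phi (last u (map hd (cur ++ es))) - phi u +
    \sum_(pc <- pieces_aux hd s B u cur es | is_jump B pc) (phi pc.1.1 - phi pc.1.2).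
Proof.
elim: es u cur => [|e es IH] u cur wk hall hnil hB.
  rewrite (hnil erefl) /= plenE !big_nil; ring.
rewrite [pieces_aux _ _ _ _ _ _]/=.
move: wk => /= /andP[/eqP tle wk].
have dcat : cur ++ e :: es = rcons cur e ++ es by rewrite cat_rcons.
case: ifP => hBe.
  rewrite big_cons.
  have lst : last u (map hd (cur ++ e :: es)) = last (hd e) (map hd es) by rewrite map_cat last_cat.
  rewrite lst in hB *.
  have IH' := IH (hd e) [::] wk isT (fun _ => erefl) hB.
  rewrite /= in IH'.
  rewrite dcat plen_cat IH' (piece_len tle hall) /=.
  case: (is_jump B (u, hd e, rcons cur e)); ring.
case: es IH wk hnil hB dcat => [|f es] IH wk hnil hB dcat.
  by rewrite cats1 map_rcons last_rcons hBe in hB.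
rewrite dcat; apply: IH.
- by rewrite map_rcons last_rcons.
- by rewrite all_rcons hBe hall.
- by [].
- by rewrite -dcat.
Qed.

Lemma sum_jumps pcs : uniq [seq pc.1.1 | pc <- pcs] ->
  \sum_(uv <- jump_pairs B pcs) (phi uv.1 - phi uv.2) =
  \sum_(pc <- pcs | is_jump B pc) (phi pc.1.1 - phi pc.1.2).
Proof.
move=> u; rewrite /jump_pairs undup_id.
  by rewrite big_map big_filter.
apply: (@map_uniq _ _ fst); rewrite -map_comp; apply: subseq_uniq u.
apply: map_subseq; exact: filter_subseq.
Qed.

Lemma lemma10_sec :
  (forall P : seq E, is_path tl hd s t P ->
     xN N x P = 1 + \sum_(uv <- J_path hd s B s P) (phi uv.1 - phi uv.2)) /\
  (forall (a : V) (C : seq E), is_cycle tl hd a C ->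
     xN N x C = \sum_(uv <- J_cycle hd s B a C) (phi uv.1 - phi uv.2)).
Proof.
have [[Bp Bd] Bs] := HB.
split.
  move=> P pP.
  have szB : (0 < size B)%N by rewrite Bs; exact: sigma_pos pP.
  have Q0B := mem_nth [::] szB; set Q0 := nth [::] B 0 in Q0B.
  have pQ0 := Bp _ Q0B.
  have hs : isBv hd s B s by apply/hasP; exists Q0 => //; rewrite /walk_verts mem_head.
  have ht : isBv hd s B t.
    case/and3P: (pQ0) => _ _ /eqP lt; apply/hasP; exists Q0 => //; rewrite -lt; exact: mem_last.
  have pss : is_path tl hd s s [::] by rewrite /is_path /= eqxx.
  have phis : phi s = 0.
    have [[R1 pR eR] hle] := Hphi (ex_intro _ [::] pss).
    have := hle _ pss; have := plen_ge0 R1; rewrite eR plenE big_nil; lra.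
  have phit : phi t = 1.
    have := prefix_phi Q0B (esym (cats0 Q0)).
    case/and3P: (pQ0) => _ _ /eqP ->; move=> ->.
    by rewrite -(xN_plen (path_uniq pQ0)) (B_facts.1 _ Q0B).
  have pp : path_pieces hd s B s P = pieces_aux hd s B s [::] P.
    by case: (P) => [|? ?] /=; rewrite hs.
  rewrite /J_path pp sum_jumps; last first.
    apply: subseq_uniq (starts_subseq _ _ _ _ _ _) _.
    case/and3P: pP => _ u _; move: u; rewrite /walk_verts lastI rcons_uniq.
    by case/andP.
  case/and3P: (pP) => wP _ /eqP lP.
  have := main_aux (u:=s) (cur:=[::]) (es:=P) wP isT (fun _ => erefl) _.
  rewrite /= lP => /(_ ht) H.
  rewrite (xN_plen (path_uniq pP)) H phis phit; ring.
move=> a C /and4P[Cn wC /eqP lC uC].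
have uCe : uniq C := map_uniq uC.
rewrite /J_cycle /cycle_pieces (xN_plen uCe).
set vs := walk_verts hd a C; set i := find _ vs.
case: ifP => iC.
  have hasB : has (isBv hd s B) vs.
    by rewrite has_find /vs /walk_verts /= size_map ltnS ltnW.
  set w0 := nth a vs i.
  have hw0 : isBv hd s B w0 := nth_find a hasB.
  have w0e : w0 = last a (map hd (take i C)).
    by rewrite /w0 /vs /walk_verts nth_last_take ?size_map ?(ltnW iC) // map_take.
  have wC' : walk_from tl hd a (take i C ++ drop i C) by rewrite cat_take_drop.
  move: wC'; rewrite walk_cat -w0e => /andP[w1 w2].
  have ld : last w0 (map hd (drop i C)) = a.
    by rewrite w0e -last_cat -map_cat cat_take_drop.
  have wr : walk_from tl hd w0 (rot i C) by rewrite /rot walk_cat w2 ld w1.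
  have lr : last w0 (map hd (rot i C)) = w0 by rewrite /rot map_cat last_cat ld w0e.
  have := main_aux (u:=w0) (cur:=[::]) (es:=rot i C) wr isT (fun _ => erefl).
  rewrite /= lr => /(_ hw0) H.
  rewrite sum_jumps.
    have pr : perm_eq (rot i C) C by rewrite perm_rot.
    rewrite !plenE -(perm_big _ pr) -plenE H; ring.
  apply: subseq_uniq (starts_subseq _ _ _ _ _ _) _.
  set sq := map hd (rot i C).
  have usq : uniq sq by rewrite /sq map_rot rot_uniq.
  have e := lastI w0 sq; rewrite lr in e.
  have : perm_eq (w0 :: sq) (w0 :: belast w0 sq) by rewrite e perm_rcons perm_refl.
  by rewrite perm_cons => /perm_uniq <-.
rewrite /jump_pairs /= big_nil.
have nB : ~~ has (isBv hd s B) vs.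
  apply/negP => hasB.
  have := hasB; rewrite has_find -/i /vs /walk_verts /= size_map ltnS leq_eqVlt iC orbF => /eqP ieq.
  have := nth_find a hasB; rewrite -/i ieq /vs /walk_verts -(size_map hd C) -last_nth lC => hBa.
  move: ieq; rewrite /i /vs /walk_verts /= hBa => /esym/eqP; rewrite size_eq0.
  by rewrite (negbTE Cn).
rewrite plenE big1_seq // => f /andP[_ fC]; apply: notB_w0.
apply/orP; left; apply: (hasPn nB).
by rewrite /vs /walk_verts inE map_f ?orbT.
Qed.

End Main.

Local Open Scope ring_scope.

Theorem lemma10 (R : realFieldType) (V E : finType) (tl hd : E -> V)
  (s t : V) (N : {set E})
  (HN : every_st_path_has_private tl hd s t N)
  (Harc : every_arc_on_st_path tl hd s t)
  (B : seq (seq E)) (HB : max_family tl hd s t N B)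
  (x : E -> R) (Hx : in_core tl hd s t N x)
  (phi : V -> R) (Hphi : is_potential tl hd s N x phi) :
  (forall P : seq E, is_path tl hd s t P ->
     xN N x P = 1 + \sum_(uv <- J_path hd s B s P) (phi uv.1 - phi uv.2)) /\
  (forall (a : V) (C : seq E), is_cycle tl hd a C ->
     xN N x C = \sum_(uv <- J_cycle hd s B a C) (phi uv.1 - phi uv.2)).
Proof.
exact: (lemma10_sec HN HB Hx Hphi).
Qed.
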